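(* Let $n,d,a,k$ be positive integers and suppose the triple $(n,d,a)$ is bad. Then (1) $(n,kd,a)$ is bad; (2) $(kn,d,a)$ is bad; (3) $(kn,kd,ka)$ is bad.
   Context: For positive integers $N,D,A$, let $R=\mathbb{C}[x_1,\dots,x_N]$ with $\mathfrak{S}_N$ permuting variables and $R_A^{\mathfrak{S}_N}$ the symmetric polynomials homogeneous of degree $A$. The triple $(N,D,A)$ is good if there exists $f\in R_A^{\mathfrak{S}_N}$ such that $x_1^D-x_N^D,\dots,x_{N-1}^D-x_N^D,f$ is a regular sequence (equivalently, $f$ has no zero on $\mathcal{V}_D=\{(z_1,\dots,z_N)\in\mathbb{C}^N: z_i^D=1\ \forall i,\ z_N=1\}$); otherwise it is bad. *)

(* Defs.v *)
From mathcomp Require Import all_boot all_algebra.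
From mathcomp Require Import reals complex.
From mathcomp Require Import mpoly.
Set Implicit Arguments.
Unset Strict Implicit.
Unset Printing Implicit Defensive.
Import GRing.Theory.
Local Open Scope ring_scope.

Definition in_VD (R : realType) (N D : nat) (z : 'I_N -> R[i]) : Prop :=
  (forall i : 'I_N, z i ^+ D = 1) /\
  (forall i : 'I_N, nat_of_ord i = N.-1 -> z i = 1).

(* (N, D, A) is good iff some symmetric f, homogeneous of degree A, has no
   zero on V_D (the regular-sequence criterion, stated in its equivalent
   zero-set form given in the definition). *)
Definition good (R : realType) (N D A : nat) : Prop :=
  exists f : {mpoly R[i][N]},
    [/\ f \is symmetric, f \is A.-homog &
        forall z : 'I_N -> R[i], in_VD D z -> f.@[z] != 0].

Definition bad (R : realType) (N D A : nat) : Prop := ~ good R N D A.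

(* Main.v *)
Require Import Defs.
From mathcomp Require Import all_boot all_algebra all_fingroup all_solvable all_field.
From mathcomp Require Import reals complex.
From mathcomp Require Import mpoly.
Set Implicit Arguments.
Unset Strict Implicit.
Unset Printing Implicit Defensive.
Import GRing.Theory Num.Theory.

Section Enc.
Variables (n k : nat).
Local Notation N := (k * n.+1)%N.

Definition vi (j : 'I_N) : 'I_n.+1 := Ordinal (ltn_pmod j (ltn0Sn n)).
Lemma vr_lt (j : 'I_N) : (j %/ n.+1 < k)%N.
Proof. by rewrite ltn_divLR. Qed.
Definition vr (j : 'I_N) : 'I_k := Ordinal (vr_lt j).
Lemma enc_lt (r : 'I_k) (i : 'I_n.+1) : (r * n.+1 + i < N)%N.
Proof.
apply: (@leq_trans (r.+1 * n.+1)); first by rewrite mulSnr ltn_add2l.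
by rewrite leq_mul2r ltn_ord orbT.
Qed.
Definition enc r i : 'I_N := Ordinal (enc_lt r i).
Lemma viE r i : vi (enc r i) = i.
Proof. by apply: val_inj => /=; rewrite modnMDl modn_small ?ltn_ord. Qed.
Lemma vrE r i : vr (enc r i) = r.
Proof. by apply: val_inj => /=; rewrite divnMDl // divn_small ?addn0. Qed.
Lemma encK j : enc (vr j) (vi j) = j.
Proof. by apply: val_inj => /=; rewrite -divn_eq. Qed.

Definition pfun (b : {perm 'I_n.+1}) (rho : 'I_n.+1 -> {perm 'I_k}) (j : 'I_N) :=
  enc (rho (vi j) (vr j)) (b (vi j)).
Lemma pfun_inj b rho : injective (pfun b rho).
Proof.
move=> j1 j2 E.
have E1 := congr1 vi E; have E2 := congr1 vr E.
rewrite /pfun !viE !vrE in E1 E2.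
have Ei := perm_inj E1; rewrite Ei in E2.
by rewrite -(encK j1) -(encK j2) Ei (perm_inj E2).
Qed.
Definition pperm b rho : {perm 'I_N} := perm (@pfun_inj b rho).
Lemma ppermE b rho j : pperm b rho j = enc (rho (vi j) (vr j)) (b (vi j)).
Proof. by rewrite /pperm permE. Qed.
End Enc.

Local Open Scope ring_scope.

Lemma prim_root_exists (C : numClosedFieldType) (n : nat) :
  (n > 0)%N -> {z : C | n.-primitive_root z}.
Proof.
pose p : {poly C} := 'X^n - 1; have [r Dp] := closed_field_poly_normal p.
move=> n_gt0; apply/sigW; rewrite (monicP _) ?monicXnsubC // scale1r in Dp.
have rn1: all n.-unity_root r by apply/allP=> z; rewrite -root_prod_XsubC -Dp.
have sz_r: (n < (size r).+1)%N.
  by rewrite -(size_prod_XsubC r id) -Dp size_XnsubC.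
have [|z] := hasP (has_prim_root n_gt0 rn1 _ sz_r); last by exists z.
by rewrite -separable_prod_XsubC -Dp separable_Xn_sub_1 // pnatr_eq0 -lt0n.
Qed.

Lemma comp_mpolyA (C : comNzRingType) (a b c : nat) (f : {mpoly C[a]})
  (t : a.-tuple {mpoly C[b]}) (S : b.-tuple {mpoly C[c]}) :
  (f \mPo t) \mPo S = f \mPo [tuple (tnth t j) \mPo S | j < a].
Proof.
rewrite [f \mPo t]comp_mpolyE [RHS]comp_mpolyE raddf_sum /=; apply: eq_bigr => m _.
rewrite comp_mpolyZ rmorph_prod /=; congr (_ *: _); apply: eq_bigr => j _.
by rewrite rmorphXn tnth_mktuple.
Qed.

Lemma coef_sumX (C : nzRingType) (n : nat) (s : seq 'X_{1..n}) (c : 'X_{1..n} -> C) m :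
  uniq s -> (\sum_(x <- s) c x *: 'X_[x])@_m = if m \in s then c m else 0.
Proof.
elim: s => [|x s IH] /=; first by rewrite big_nil mcoeff0.
case/andP=> xs us; rewrite big_cons mcoeffD mcoeffZ mcoeffX IH // in_cons.
case: (eqVneq x m) => [<-|_] /=; last by rewrite mulr0 add0r.
by rewrite (negbTE xs) mulr1 addr0.
Qed.

Section Tup.
Variables (C : numClosedFieldType) (n k : nat).
Local Notation N := (k * n.+1)%N.

Definition tt (c : 'I_k -> C) : N.-tuple {mpoly C[n.+1]} :=
  [tuple c (vr j) *: 'X_(vi j) | j < N].

Lemma msymXU (s : 'S_n.+1) (i : 'I_n.+1) :
  msym s ('X_i : {mpoly C[n.+1]}) = 'X_(s i).
Proof. by rewrite /msym mmapX mmap1U. Qed.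

Lemma perm_eq_enum_perm (T : finType) (s : {perm T}) :
  perm_eq (enum T) [seq s x | x <- enum T].
Proof.
apply: uniq_perm; rewrite ?enum_uniq ?(map_inj_uniq (@perm_inj _ s)) ?enum_uniq //.
move=> x; rewrite mem_enum; apply/esym/mapP; exists (s^-1 x)%g; rewrite ?mem_enum //.
by rewrite permKV.
Qed.

Lemma tt_sym c (f : {mpoly C[N]}) : f \is symmetric -> f \mPo tt c \is symmetric.
Proof.
move=> fs; apply: msym_comp_poly => // s.
pose sg := @pperm n k s (fun _ => 1%g).
have -> : [tuple msym s (tt c)`_i | i < N] = [tuple tnth (tt c) (sg i) | i < N].
  apply: eq_from_tnth => j; rewrite !tnth_mktuple -tnth_nth !tnth_mktuple.
  by rewrite /sg ppermE viE vrE perm1 msymZ msymXU.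
have E1 : tval (tt c) = [seq tnth (tt c) x | x <- enum 'I_N] by rewrite map_tnth_enum.
have E2 : tval [tuple tnth (tt c) (sg i) | i < N] =
   [seq tnth (tt c) x | x <- [seq sg x | x <- enum 'I_N]].
  by rewrite -map_comp /= -val_ord_tuple.
rewrite E2 {1}E1; apply: perm_map; exact: perm_eq_enum_perm.
Qed.

Lemma comp_homog (a b : nat) (t : a.-tuple {mpoly C[b]}) (f : {mpoly C[a]}) d :
  (forall j, tnth t j \is 1.-homog) -> f \is d.-homog -> f \mPo t \is d.-homog.
Proof.
move=> ht /dhomogP hf; rewrite comp_mpolyE big_seq; apply: rpred_sum => m /hf <-.
apply: dhomogZ.
suff H : \prod_(i < a) tnth t i ^+ m i \is (\sum_i m i)%N.-homog by move: H; rewrite -mdegE.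
apply: (big_ind2 (fun (e : nat) (p : {mpoly C[b]}) => p \is e.-homog)).
- exact: dhomog1.
- by move=> e1 p1 e2 p2 h1 h2; apply: dhomogM.
- by move=> j _; have := dhomogMn (m j) (ht j); rewrite mul1n.
Qed.

Lemma tt_homog c (f : {mpoly C[N]}) d : f \is d.-homog -> f \mPo tt c \is d.-homog.
Proof.
apply: comp_homog => j; rewrite tnth_mktuple; apply: dhomogZ.
apply/dhomogP => m; rewrite msuppX inE => /eqP ->; exact: mdeg1.
Qed.

Lemma tt_eval c (f : {mpoly C[N]}) w :
  (f \mPo tt c).@[w] = f.@[fun j => c (vr j) * w (vi j)].
Proof.
rewrite comp_mpoly_meval; apply: meval_eq => j.
by rewrite tnth_mktuple mevalZ mevalXU.
Qed.
End Tup.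

Section Root.
Variables (C : numClosedFieldType) (n k : nat) (z : C).
Hypothesis hz : k.-primitive_root z.
Local Notation N := (k * n.+1)%N.

Definition cz (r : 'I_k) : C := z ^+ r.+1.
Local Notation ttz := (@tt C n k cz).

Definition Ssc (i0 : 'I_n.+1) : n.+1.-tuple {mpoly C[n.+1]} :=
  [tuple (if l == i0 then z else 1) *: 'X_l | l < n.+1].

Lemma inv_Ssc (f : {mpoly C[N]}) i0 : f \is symmetric ->
  (f \mPo ttz) \mPo Ssc i0 = f \mPo ttz.
Proof.
move=> fs; rewrite comp_mpolyA.
pose tau := @pperm n k 1%g (fun i => if i == i0 then perm (@ordS_inj k) else 1%g).
have -> : [tuple tnth (ttz) j \mPo Ssc i0 | j < N] = [tuple tnth (ttz) (tau j) | j < N].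
  apply: eq_from_tnth => j; rewrite !tnth_mktuple comp_mpolyZ comp_mpolyXU.
  rewrite -tnth_nth !tnth_mktuple /tau ppermE viE vrE perm1 scalerA.
  case: eqP => _; last by rewrite perm1 mulr1.
  by rewrite permE /cz /= [in RHS]exprS (prim_expr_mod hz) mulrC.
by rewrite -[in RHS](issymP _ fs tau) msym_mPo.
Qed.

Lemma Ssc_coef (p : {mpoly C[n.+1]}) i0 m : (p \mPo Ssc i0)@_m = p@_m * z ^+ (m i0).
Proof.
rewrite comp_mpolyEX.
have -> : \sum_(m' <- msupp p) p@_m' *: ('X_[m'] \mPo Ssc i0) =
          \sum_(m' <- msupp p) (p@_m' * z ^+ (m' i0)) *: 'X_[m'].
  apply: eq_bigr => m' _; rewrite comp_mpolyX -scalerA; congr (_ *: _).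
  under eq_bigr => l _ do rewrite tnth_mktuple exprZn.
  rewrite scaler_prod -mpolyXE_id; congr (_ *: _).
  rewrite (bigD1 i0) //= eqxx big1 ?mulr1 // => l /negbTE ->; exact: expr1n.
rewrite coef_sumX ?msupp_uniq //; case: ifP => // /negbT /memN_msupp_eq0 ->.
by rewrite mul0r.
Qed.

Lemma key_dvd (f : {mpoly C[N]}) m i0 : f \is symmetric ->
  m \in msupp (f \mPo ttz) -> (k %| m i0)%N.
Proof.
move=> fs; rewrite mcoeff_msupp => nz.
have := Ssc_coef (f \mPo ttz) i0 m; rewrite inv_Ssc // => E.
rewrite (prim_order_dvd hz); apply/eqP; apply: (mulfI nz).
by rewrite -E mulr1.
Qed.

Definition mdivk (m : 'X_{1..n.+1}) : 'X_{1..n.+1} := [multinom (m i %/ k)%N | i < n.+1].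
Definition gpol (h : {mpoly C[n.+1]}) := \sum_(m <- msupp h) h@_m *: 'X_[mdivk m].

Section G.
Variable h : {mpoly C[n.+1]}.
Hypothesis Hd : forall m, m \in msupp h -> forall i, (k %| m i)%N.
Let kpos : (0 < k)%N. Proof. exact: prim_order_gt0 hz. Qed.

Lemma g_coef mu : (gpol h)@_mu = h@_(mu *+ k)%MM.
Proof.
rewrite /gpol raddf_sum /= [h in RHS]mpolyE raddf_sum /=.
apply: eq_big_seq => m ms; rewrite !mcoeffZ !mcoeffX; congr (_ * (_ : bool)%:R).
apply/eqP/eqP => [<-|->]; apply/mnmP => i.
  by rewrite mulmnE mnmE divnK ?Hd.
by rewrite mnmE mulmnE mulnK.
Qed.

Lemma g_sym : h \is symmetric -> gpol h \is symmetric.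
Proof.
move=> hs; apply/issymP => s; apply/mpolyP => mu.
rewrite mcoeff_sym !g_coef -[in RHS](issymP _ hs s) mcoeff_sym; congr (mcoeff _ _).
by apply/mnmP => i; rewrite !(mnmE, mulmnE).
Qed.

Lemma g_homog e : h \is (muln k e).-homog -> gpol h \is e.-homog.
Proof.
move=> /dhomogP hh; apply/dhomogP => mu; rewrite mcoeff_msupp g_coef -mcoeff_msupp.
move=> /hh H; have E : (mdeg mu * k = k * e)%N by rewrite -mdegMn; exact: H.
suff : mdeg mu = e by [].
by apply/eqP; rewrite -(eqn_pmul2r kpos) E mulnC.
Qed.

Lemma g_eval w : (gpol h).@[fun i => w i ^+ k] = h.@[w].
Proof.
rewrite /gpol raddf_sum /= mevalE; apply: eq_big_seq => m ms.
rewrite mevalZ mevalX; congr (_ * _); apply: eq_bigr => i _.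
by rewrite -exprM mnmE mulnC divnK ?Hd.
Qed.
End G.
End Root.

Lemma last_idx n k (j : 'I_(k * n.+1)) :
  nat_of_ord j = (k * n.+1).-1 -> nat_of_ord (vi j) = n /\ nat_of_ord (vr j) = k.-1.
Proof.
case: k j => [|k] j; first by case: j => /= m; rewrite mul0n.
have -> : (k.+1 * n.+1).-1 = (k * n.+1 + n)%N by rewrite mulSnr addnS.
move=> /= ->; split; first by rewrite modnMDl modn_small.
by rewrite divnMDl // divn_small ?addn0.
Qed.

Theorem proposition3p22 (R : realType) (n d a k : nat) :
  (0 < n)%N -> (0 < d)%N -> (0 < a)%N -> (0 < k)%N ->
  bad R n d a ->
  [/\ bad R n (k * d) a, bad R (k * n) d a & bad R (k * n) (k * d) (k * a)].
Proof.
move=> n0 d0 a0 k0 hb; split.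
- move=> [f [fs fh fz]]; apply: hb; exists f; split => // x [x1 x2].
  by apply: fz; split => // i; rewrite mulnC exprM x1 expr1n.
- case: n n0 hb => // n _ hb [f [fs fh fz]]; apply: hb.
  exists (f \mPo @tt _ n k (fun _ => 1)); split.
  + exact: tt_sym.
  + exact: tt_homog.
  + move=> x [x1 x2]; rewrite tt_eval; apply: fz; split => j.
    * by rewrite mul1r x1.
    * by move=> Hj; have [H1 _] := last_idx Hj; rewrite mul1r; apply: x2.
- case: n n0 hb => // n _ hb [f [fs fh fz]]; apply: hb.
  have [z hz] := prim_root_exists (R[i]) k0.
  pose h := f \mPo @tt _ n k (cz z).
  have Hd : forall m, m \in msupp h -> forall i, (k %| m i)%N.
    by move=> m ms i; exact: (key_dvd hz i fs ms).
  exists (gpol k h); split.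
  + exact: (g_sym hz Hd (tt_sym _ fs)).
  + exact: (g_homog hz Hd (tt_homog _ fh)).
  + move=> x [x1 x2].
    pose w i := k.-root (x i).
    have xw : x =1 (fun i => w i ^+ k) by move=> i; rewrite /w rootCK.
    rewrite (meval_eq _ xw) (g_eval Hd) tt_eval; apply: fz; split => j.
    * rewrite exprMn /cz -exprM mulnCA exprM (prim_expr_order hz) expr1n mul1r.
      by rewrite /w exprM rootCK // x1.
    * move=> Hj; have [H1 H2] := last_idx Hj.
      have -> : w (vi j) = 1.
        by rewrite /w (x2 (vi j) H1) rootC1.
      by rewrite mulr1 /cz H2 prednK // (prim_expr_order hz).
Qed.
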